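(* Every map in $\mathcal{UM}^0_{ABAB}$ contains at least one chequered quadrangle (type 4) or at least one opposite colored cylinder (type 7) among its non-root 2-cells.
   Context: Colors: red corresponds to the letter $A$, blue to the letter $B$. The allowed non-root 2-cells, each with a colored boundary, are the following seven types. (1) Red quadrangle: a disc bounded by a 4-gon with all edges red. (2) Blue quadrangle: a disc bounded by a 4-gon with all edges blue. (3) Adjacent colored quadrangle: a disc bounded by a 4-gon whose edge colors in cyclic order are red, red, blue, blue. (4) Chequered quadrangle: a disc bounded by a 4-gon whose edge colors in cyclic order are red, blue, red, blue. (5) Red cylinder: a cylinder whose two boundary circles are each a 2-gon with red edges. (6) Blue cylinder: a cylinder whose two boundary circles are each a 2-gon with blue edges. (7) Opposite colored cylinder: a cylinder whose one boundary circle is a 2-gon with red edges and whose other boundary circle is a 2-gon with blue edges. The root face is a disc bounded by a 4-gon with edge colors in cyclic order red, blue, red, blue (the word $ABAB$), with one marked edge. A 2-colored unstable map with root word $ABAB$ consists of the root face together with a finite collection of copies of the allowed 2-cells. All boundary edges are partitioned into pairs, each pair consisting of two edges of the same color, and the two edges of each pair are identified orientation-reversingly, so that the result is a closed oriented surface. Maps are considered up to orientation-preserving homeomorphism preserving colors and the root. $\mathcal{UM}^0_{ABAB}$ is the set of such maps for which the resulting closed surface is connected and homeomorphic to the 2-sphere (genus zero). *)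

(* Defs.v *)
From mathcomp Require Import all_boot.
Set Warnings "-notation-overridden".
Set Implicit Arguments. Unset Strict Implicit. Unset Printing Implicit Defensive.

(* Combinatorial encoding of a 2-colored unstable map.
   - S : finite type of edge-sides (boundary edges of all 2-cells, root included).
   - next : S -> S, successor of a side along its boundary circle, following
     the boundary orientation induced by the orientation of the cell;
     the boundary circles are the orbits of next.  The corner at the start
     of side s is labelled by s.
   - col s = true  iff the side s is red (letter A); false = blue (letter B).
   - cell : S -> C assigns each side to its 2-cell (C a finite type of cells).
   - alpha : the pairing of sides (fixed-point-free involution, color
     preserving); s and alpha s are identified orientation-reversingly, so
     the start corner of s is identified with the end corner of alpha s,
     i.e. with the start corner of next (alpha s).
   - r : the marked edge of the root face. *)

Section UMap.
Variables (S C : finType) (next alpha : S -> S) (col : S -> bool)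
  (cell : S -> C).

(* s lies on a 4-gon boundary circle which is the whole boundary of cell c:
   c is a disc bounded by a 4-gon. *)
Definition quad_at (c : C) (s : S) : Prop :=
  cell s = c /\ order next s = 4 /\ (forall t, cell t = c -> fconnect next s t).

(* c is a cylinder whose two boundary circles (through s and t) are 2-gons. *)
Definition cyl_at (c : C) (s t : S) : Prop :=
  cell s = c /\ cell t = c /\ ~~ fconnect next s t /\
  order next s = 2 /\ order next t = 2 /\
  (forall u, cell u = c -> fconnect next s u || fconnect next t u).

Definition red_quadrangle (c : C) : Prop :=
  exists s, quad_at c s /\ forall t, cell t = c -> col t.
Definition blue_quadrangle (c : C) : Prop :=
  exists s, quad_at c s /\ forall t, cell t = c -> ~~ col t.
Definition adjacent_colored_quadrangle (c : C) : Prop :=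
  exists s, quad_at c s /\
    [/\ col s, col (next s), ~~ col (iter 2 next s) & ~~ col (iter 3 next s)].
Definition chequered_quadrangle (c : C) : Prop :=
  exists s, quad_at c s /\
    [/\ col s, ~~ col (next s), col (iter 2 next s) & ~~ col (iter 3 next s)].
Definition red_cylinder (c : C) : Prop :=
  exists s t, cyl_at c s t /\ forall u, cell u = c -> col u.
Definition blue_cylinder (c : C) : Prop :=
  exists s t, cyl_at c s t /\ forall u, cell u = c -> ~~ col u.
Definition opposite_colored_cylinder (c : C) : Prop :=
  exists s t, cyl_at c s t /\
    (forall u, fconnect next s u -> col u) /\
    (forall u, fconnect next t u -> ~~ col u).

Definition allowed_cell (c : C) : Prop :=
  red_quadrangle c \/ blue_quadrangle c \/ adjacent_colored_quadrangle c \/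
  chequered_quadrangle c \/ red_cylinder c \/ blue_cylinder c \/
  opposite_colored_cylinder c.

Definition root_face (r : S) : Prop :=
  quad_at (cell r) r /\
  [/\ col r, ~~ col (next r), col (iter 2 next r) & ~~ col (iter 3 next r)].

(* a cell is a disc iff its sides form a single boundary circle *)
Definition is_disc (c : C) : bool :=
  [exists s, (cell s == c) && [forall t, (cell t == c) ==> fconnect next s t]].

(* vertices: classes of corners under the identification s ~ next (alpha s) *)
Definition vrel : rel S := fun s t => (next (alpha s) == t) || (next (alpha t) == s).
Definition num_vertices : nat := #|[set root vrel s | s : S]|.
Definition num_discs : nat := #|[set c : C | is_disc c]|.

Definition adj : rel S := fun s t =>
  [|| alpha s == t, next s == t | cell s == cell t].
Definition glued_connected : Prop := forall s t, connect adj s t.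

(* Euler characteristic of the glued closed
   oriented surface: V - E + #discs (cylinders contribute 0), E = #|S|/2;
   genus 0 (connected) iff chi = 2, i.e. 2(V + D) = #|S| + 4. *)
Definition UM0_ABAB (r : S) : Prop :=
  injective next /\
  (forall s, cell (next s) = cell s) /\
  (forall s, alpha (alpha s) = s) /\
  (forall s, alpha s != s) /\
  (forall s, col (alpha s) = col s) /\
  root_face r /\
  (forall c, c != cell r -> allowed_cell c) /\
  glued_connected /\
  2 * (num_vertices + num_discs) = #|S| + 4.

End UMap.

(* Main.v *)
Require Import Defs.
From Stdlib Require Classical.
From HB Require Import structures.
From mathcomp Require Import all_boot all_algebra zify.
Set Implicit Arguments. Unset Strict Implicit. Unset Printing Implicit Defensive.
Import GRing.Theory.
Local Open Scope ring_scope.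

Notation F := ('F_2)^o.

Lemma f2all (P : F -> bool) : P 0 -> P 1 -> forall a, P a.
Proof. move=> h0 h1 [[|[|n]] Hn] //.
- by have -> : Ordinal Hn = 0 :> 'F_2 by apply: val_inj.
- by have -> : Ordinal Hn = 1 :> 'F_2 by apply: val_inj.
Qed.
Lemma f2cases (a : F) : a = 0 \/ a = 1.
Proof.
have : (a == 0) || (a == 1) by move: a; apply: f2all.
by case/orP => /eqP; auto.
Qed.
Lemma f2add (a : F) : a + a = 0.
Proof. by case: (f2cases a) => ->; apply/eqP. Qed.
Lemma f2eq (a b : F) : a + b = 0 -> a = b.
Proof. by move=> H; rewrite -[a]addr0 -(f2add b) addrA H add0r. Qed.
Lemma f2one : (1 : F) != 0. Proof. by []. Qed.

Definition bit (b : bool) : F := (b%:R).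
Lemma bitT : bit true = 1. Proof. by []. Qed.
Lemma bitF : bit false = 0. Proof. by []. Qed.

Lemma ffadd (T : finType) (x : {ffun T -> F}) : x + x = 0.
Proof. by apply/ffunP => t; rewrite !ffunE f2add. Qed.

Lemma dimfull (T : finType) : \dim (fullv : {vspace {ffun T -> F}}) = #|T|.
Proof. by rewrite dimvf /dim /= muln1. Qed.

Definition mklin (U W : vectType F) (f : U -> W) (H : semilinear f) : 'Hom(U,W) :=
  linfun (HB.pack f (GRing.isSemilinear.Build _ _ _ _ f H) : {linear U -> W}).
Arguments mklin {U W f}.
Lemma mklinE (U W : vectType F) (f : U -> W) (H : semilinear f) x : mklin H x = f x.
Proof. by rewrite lfunE. Qed.

Definition ev (T : finType) (s : T) : {ffun T -> F} := [ffun t => bit (t == s)].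

Lemma sum_ind (T : finType) (P : pred T) (s : T) :
  \sum_(t | P t) bit (t == s) = bit (P s).
Proof.
case Ps: (P s).
  rewrite (bigD1 s) //= eqxx big1 ?addr0 // => t /andP[_ Ht].
  by rewrite (negbTE Ht).
rewrite big1 // => t Pt; case: eqP => // Ets.
by rewrite Ets Ps in Pt.
Qed.

Lemma vec_decomp (T : finType) (P : pred T) (y : {ffun T -> F}) :
  (forall t, ~~ P t -> y t = 0) -> y = \sum_(s | P s) y s *: ev s.
Proof.
move=> Hy; apply/ffunP => t; rewrite sum_ffunE.
under eq_bigr do rewrite ffunE ffunE.
case Pt: (P t).
  rewrite (bigD1 t) //= eqxx big1 ?addr0; first by rewrite /bit /= -[RHS]/(y t * 1) mulr1.
  by move=> s /andP[_ Hs]; rewrite eq_sym (negbTE Hs) /bit scaler0.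
rewrite Hy ?Pt // big1 // => s Ps.
have /negbTE -> : t != s by apply/eqP => E; rewrite E Ps in Pt.
by rewrite /bit scaler0.
Qed.

Lemma span_sum (T : finType) (P : pred T) (y : {ffun T -> F}) :
  (forall t, ~~ P t -> y t = 0) -> y \in <<[seq ev s | s <- enum P]>>%VS.
Proof.
move=> Hy; rewrite (vec_decomp Hy); apply: memv_suml => s Ps.
by apply: memvZ; apply: memv_span; apply: map_f; rewrite mem_enum.
Qed.

Section Main.
Variables (S C : finType) (next alpha : S -> S) (col : S -> bool)
  (cell : S -> C) (r : S).
Hypothesis inj_next : injective next.
Hypothesis cell_next : forall s, cell (next s) = cell s.
Hypothesis alphaK : forall s, alpha (alpha s) = s.
Hypothesis alpha_neq : forall s, alpha s != s.
Hypothesis col_alpha : forall s, col (alpha s) = col s.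
Hypothesis root_r : root_face next col cell r.
Hypothesis allowed : forall c, c != cell r -> allowed_cell next col cell c.
Hypothesis gconn : glued_connected next alpha cell.
Hypothesis euler : 2 * (num_vertices next alpha + num_discs next cell) = #|S| + 4.

Notation VS := {ffun S -> F}.
Notation VC := {ffun C -> F}.
Notation "x ~ y" := (fconnect next x y) (at level 70).

Lemma fsym x y : (x ~ y) = (y ~ x).
Proof. exact: fconnect_sym. Qed.
Lemma ftrans x y z : x ~ y -> y ~ z -> x ~ z.
Proof. exact: connect_trans. Qed.

Lemma cell_iter n s : cell (iter n next s) = cell s.
Proof. by elim: n => //= n IH; rewrite cell_next. Qed.
Lemma cell_conn s t : s ~ t -> cell t = cell s.
Proof. by move/iter_findex <-; rewrite cell_iter. Qed.

Lemma cell_shape c :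
  (exists s, quad_at next cell c s) \/ (exists s t, cyl_at next cell c s t).
Proof.
case: (eqVneq c (cell r)) => [->|/allowed].
  by left; exists r; case: root_r.
case=> [[s [H _]]|[[s [H _]]|[[s [H _]]|[[s [H _]]|]]]]; try by left; exists s.
case=> [[s [t [H _]]]|[[s [t [H _]]]|[s [t [H _]]]]]; by right; exists s, t.
Qed.

Lemma cell_side c : exists s, cell s = c.
Proof. by case: (cell_shape c) => [[s [H _]]|[s [t [H _]]]]; exists s. Qed.

Lemma alpha_inj : injective alpha.
Proof. exact: (can_inj alphaK). Qed.


Definition Bf (x : VS) : VS := [ffun s => x s + x (next (alpha s))].
Definition Af (x : VS) : VS := [ffun s => x (next s) + x s].
Definition Symf (x : VS) : VS := [ffun s => x s + x (alpha s)].
Definition Sigf (x : VS) : VC := [ffun c => \sum_(s | cell s == c) x s].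
Definition kc (c : C) (x : VS) : F :=
  if ~~ is_disc next cell c then
    match [pick s | cell s == c] with
    | Some s0 => match [pick t | (cell t == c) && ~~ (s0 ~ t)] with
                 | Some t0 => x s0 + x t0 | None => 0 end
    | None => 0 end
  else 0.
Definition Kf (x : VS) : VC := [ffun c => kc c x].

Lemma Bf_lin : semilinear Bf.
Proof. by split=> [a x|x y]; apply/ffunP=> s; rewrite !ffunE ?scalerDr // addrACA. Qed.
Lemma Af_lin : semilinear Af.
Proof. by split=> [a x|x y]; apply/ffunP=> s; rewrite !ffunE ?scalerDr // addrACA. Qed.
Lemma Symf_lin : semilinear Symf.
Proof. by split=> [a x|x y]; apply/ffunP=> s; rewrite !ffunE ?scalerDr // addrACA. Qed.
Lemma Sigf_lin : semilinear Sigf.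
Proof.
split=> [a x|x y]; apply/ffunP=> c; rewrite !ffunE.
  by rewrite scaler_sumr; apply: eq_bigr => s _; rewrite ffunE.
by rewrite -big_split; apply: eq_bigr => s _; rewrite ffunE.
Qed.
Lemma Kf_lin : semilinear Kf.
Proof.
split=> [a x|x y]; apply/ffunP=> c; rewrite !ffunE /kc;
  case: ifP => _; rewrite ?scaler0 ?addr0 //;
  case: pickP => [s0 _|_]; rewrite ?scaler0 ?addr0 //;
  case: pickP => [t0 _|_]; rewrite ?scaler0 ?addr0 // !ffunE ?scalerDr //.
by rewrite addrACA.
Qed.

Definition Bm := mklin Bf_lin.
Definition Am := mklin Af_lin.
Definition Symm := mklin Symf_lin.
Definition Sigm := mklin Sigf_lin.
Definition Km := mklin Kf_lin.

Definition P := lker Bm.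
Definition P' := (P :&: lker Km)%VS.
Definition AP := (Am @: P')%VS.
Definition Sym := lker Symm.
Definition Z := (Sym :&: lker Sigm)%VS.


Lemma dim_add_le (T : vectType F) (U W : {vspace T}) : (\dim (U + W) <= \dim U + \dim W)%N.
Proof. by rewrite -dimv_sum_cap leq_addr. Qed.

Lemma vrel_sym : connect_sym (vrel next alpha).
Proof. by apply: sym_connect_sym => x y; rewrite /vrel orbC. Qed.

Definition Rv := [set fingraph.root (vrel next alpha) s | s : S].

Lemma P_mem (x : VS) : (x \in P) = [forall s, x s == x (next (alpha s))].
Proof.
rewrite /P memv_ker mklinE; apply/eqP/forallP => [H s|H].
  by apply/eqP/f2eq; move/ffunP: H => /(_ s); rewrite !ffunE.
by apply/ffunP => s; rewrite !ffunE (eqP (H s)) f2add.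
Qed.

Lemma dimP : (num_vertices next alpha <= \dim P)%N.
Proof.
set Q := [pred t | t \notin Rv].
have sub : (fullv <= P + <<[seq ev s | s <- enum Q]>>)%VS.
  apply/subvP => x _.
  pose psi : VS := [ffun s => x (fingraph.root (vrel next alpha) s)].
  have Hp : psi \in P.
    rewrite P_mem; apply/forallP => s; rewrite !ffunE; apply/eqP; congr (x _).
    apply/(fingraph.rootP vrel_sym); apply: connect1; by rewrite /vrel eqxx.
  rewrite -[x](addrNK psi) addrC; apply: memv_add => //.
  apply: span_sum => t; rewrite inE negbK => /imsetP[s0 _ ->].
  by rewrite !ffunE (fingraph.root_root vrel_sym) subrr.
have := dimvS sub; rewrite dimfull => H1.
have := leq_trans H1 (dim_add_le _ _) => H2.
have := dim_span [seq ev s | s <- enum Q]; rewrite size_map -cardE => H3.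
have H4 : (#|Q| + #|Rv| = #|S|)%N.
  by rewrite -(cardC Rv) addnC; congr (_ + _); apply: eq_card => t; rewrite !inE.
have E : num_vertices next alpha = #|Rv| by [].
have H5 : (#|S| <= \dim P + #|Q|)%N.
  by apply: (leq_trans H2); rewrite leq_add2l.
rewrite E -(leq_add2r #|Q|) addnC H4; apply: (leq_trans H5); by rewrite addnC.
Qed.

Definition ND := [pred c | ~~ is_disc next cell c].

Lemma dimKer : (#|S| <= \dim (lker Km) + #|ND|)%N.
Proof.
have := limg_ker_dim Km fullv; rewrite capfv dimfull => <-.
rewrite leq_add2l.
have sub : (Km @: fullv <= <<[seq ev c | c <- enum ND]>>)%VS.
  apply/subvP => y /memv_imgP[x _ ->]; apply: span_sum => c.
  by rewrite mklinE ffunE /kc inE negbK => ->.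
by apply: leq_trans (dimvS sub) _; rewrite (leq_trans (dim_span _)) // size_map -cardE.
Qed.

Lemma dimP' : (\dim P + \dim (lker Km) <= \dim P' + #|S|)%N.
Proof.
rewrite /P' -dimv_sum_cap [(_ + #|S|)%N]addnC leq_add2r -(dimfull S) dimvS //; exact: subvf.
Qed.


Notation adjS := (adj next alpha cell).

Lemma path_prop (Pr : S -> Prop) :
  (forall a b, adjS a b -> Pr a -> Pr b) -> Pr r -> forall s, Pr s.
Proof.
move=> step Pr0 s; have /connectP[p pth ->] := gconn r s.
elim: p r pth Pr0 => [|b p IH] a //= /andP[ab pth] Pa.
exact: (IH b pth (step a b ab Pa)).
Qed.

Lemma fval (x : VS) (hA : forall s, x (next s) = x s) s t : s ~ t -> x t = x s.
Proof.
move/iter_findex <-; elim: (findex next s t) => //= n IH.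
by rewrite hA IH.
Qed.

Lemma cyl_not_disc c s t : cyl_at next cell c s t -> ~~ is_disc next cell c.
Proof.
case=> [cs [ct [nst _]]]; apply/negP => /existsP[w /andP[/eqP cw /forallP H]].
have ws : w ~ s by move: (H s); rewrite cs eqxx.
have wt : w ~ t by move: (H t); rewrite ct eqxx.
by rewrite fsym in ws; rewrite (ftrans ws wt) in nst.
Qed.

Lemma two_orbits c s t s0 t0 a : cyl_at next cell c s t ->
  cell s0 = c -> cell t0 = c -> cell a = c -> ~~ (s0 ~ t0) -> ~~ (s0 ~ a) -> t0 ~ a.
Proof.
case=> [_ [_ [nst [_ [_ H]]]]] cs0 ct0 ca n1 n2.
move: (H s0 cs0) (H t0 ct0) (H a ca) => h1 h2 h3.
case/orP: h1 => h1.
- case/orP: h2 => h2.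
    by rewrite fsym in h1; rewrite (ftrans h1 h2) in n1.
  case/orP: h3 => h3.
    by rewrite fsym in h1; rewrite (ftrans h1 h3) in n2.
  by rewrite fsym in h2; apply: ftrans h2 h3.
- case/orP: h2 => h2.
    case/orP: h3 => h3; last by rewrite fsym in h1; rewrite (ftrans h1 h3) in n2.
    by rewrite fsym in h2; apply: ftrans h2 h3.
  by rewrite fsym in h1; rewrite (ftrans h1 h2) in n1.
Qed.

Lemma ker_const (x : VS) : x \in P -> x \in lker Km -> x \in lker Am ->
  forall s, x s = x r.
Proof.
move=> xP xK xA; move: xP; rewrite P_mem => /forallP hP.
move: xK; rewrite memv_ker mklinE => /eqP hK.
move: xA; rewrite memv_ker mklinE => /eqP hA'.
have hA : forall s, x (next s) = x s.
  by move=> s; apply: f2eq; move/ffunP: hA' => /(_ s); rewrite !ffunE.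
have hal : forall s, x (alpha s) = x s.
  by move=> s; rewrite (eqP (hP (alpha s))) alphaK hA.
have hcell : forall u v, cell u = cell v -> x u = x v.
  move=> u v cuv; set c := cell u.
  case: (cell_shape c) => [[s0 [cs0 [_ H]]]|[s [t Hc]]].
    by rewrite (fval hA (H u erefl)) (fval hA (H v (esym cuv))).
  have nd := cyl_not_disc Hc.
  move/ffunP: hK => /(_ c); rewrite !ffunE /kc nd.
  case: pickP => [s0 /eqP cs0|/(_ u)]; last by rewrite eqxx.
  move=> hk0.
  suff key : forall a, cell a = c -> x a = x s0.
    by rewrite (key u) // (key v) // -cuv.
  move=> a ca; case sa: (s0 ~ a); first by rewrite (fval hA sa).
  move: hk0; case: pickP => [t0 /andP[/eqP ct0 nt0]|/(_ a)]; last by rewrite ca eqxx sa.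
  move/f2eq => e; rewrite e; apply: fval => //.
  exact: (two_orbits Hc cs0 ct0 ca nt0 (negbT sa)).
move=> s; apply: esym; move: s; apply: path_prop => // a b.
case/or3P => [/eqP <-|/eqP <-|/eqP cab] ->; rewrite ?hal ?hA //.
exact: hcell.
Qed.

Definition one : VS := [ffun _ => 1].

Lemma dimker1 : (\dim (P' :&: lker Am) <= 1)%N.
Proof.
have sub : (P' :&: lker Am <= <[one]>)%VS.
  apply/subvP => x /memv_capP[/memv_capP[xP xK] xA].
  have -> : x = x r *: one.
    by apply/ffunP => s; rewrite !ffunE (ker_const xP xK xA) -[RHS]/(x r * 1) mulr1.
  exact/memvZ/memv_line.
by apply: leq_trans (dimvS sub) _; rewrite dim_vline leq_b1.
Qed.


Definition H := [set s | (enum_rank s < enum_rank (alpha s))%N].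

Lemma H_alpha s : (alpha s \in H) = (s \notin H).
Proof.
rewrite !inE alphaK.
have ne : (nat_of_ord (enum_rank (alpha s)) != enum_rank s).
  by rewrite (inj_eq val_inj) (inj_eq enum_rank_inj) alpha_neq.
by rewrite [in RHS]ltnNge negbK ltn_neqAle ne.
Qed.

Lemma cardH : (#|S| = 2 * #|H|)%N.
Proof.
have E : alpha @: H = ~: H.
  apply/setP => t; rewrite inE -H_alpha.
  apply/imsetP/idP => [[u uH ->]|tH]; first by rewrite alphaK.
  by exists (alpha t); rewrite ?alphaK.
by rewrite -(cardsC H) -E card_imset ?mul2n ?addnn //; apply: alpha_inj.
Qed.

Definition pairv (s : S) : VS := ev s + ev (alpha s).

Lemma Sym_mem (x : VS) : (x \in Sym) = [forall s, x (alpha s) == x s].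
Proof.
rewrite /Sym memv_ker mklinE; apply/eqP/forallP => [E s|E].
  by apply/eqP/esym/f2eq; move/ffunP: E => /(_ s); rewrite !ffunE.
by apply/ffunP => s; rewrite !ffunE (eqP (E s)) f2add.
Qed.

Lemma Sym_memP (x : VS) : x \in Sym -> forall s, x (alpha s) = x s.
Proof. by rewrite Sym_mem => /forallP xS s; apply/eqP. Qed.

Lemma alpha_eq t s : (alpha t == s) = (t == alpha s).
Proof. by apply/eqP/eqP => [<-|->]; rewrite alphaK. Qed.

Lemma pair_Sym s : pairv s \in Sym.
Proof.
rewrite Sym_mem; apply/forallP => t; rewrite !ffunE alpha_eq (inj_eq alpha_inj).
by rewrite addrC eqxx.
Qed.

Lemma dimSym : (\dim Sym <= #|H|)%N.
Proof.
have sub : (Sym <= <<[seq pairv s | s <- enum H]>>)%VS.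
  apply/subvP => x /Sym_memP xS.
  have triv : forall t, ~~ xpredT t -> x t = 0 by [].
  have -> : x = \sum_(s in H) x s *: pairv s.
    apply: (etrans (@vec_decomp _ xpredT x triv)).
    rewrite [LHS](bigID (fun s => s \in H)) /=.
    rewrite [X in _ + X = _](reindex_inj alpha_inj) /=.
    rewrite [X in _ + X = _](eq_bigl (fun s => s \in H)); last by move=> s; rewrite H_alpha negbK.
    rewrite -big_split /=; apply: eq_bigr => s _.
    by rewrite xS -scalerDr.
  apply: memv_suml => s sH; apply/memvZ/memv_span/map_f.
  by rewrite mem_enum.
by apply: leq_trans (dimvS sub) _; rewrite (leq_trans (dim_span _)) // size_map -cardE.
Qed.

Definition ddv (s : S) : VC := ev (cell s) + ev (cell (alpha s)).

Lemma Sig_pair s : Sigm (pairv s) = ddv s.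
Proof.
rewrite mklinE; apply/ffunP => c; rewrite !ffunE.
under eq_bigr do rewrite !ffunE.
rewrite big_split /= !sum_ind /=.
by rewrite ![(c == _)]eq_sym.
Qed.

Lemma dimSig : (#|C| <= \dim (Sigm @: Sym) + 1)%N.
Proof.
have sub1 : (<<[seq ddv s | s <- enum S]>> <= Sigm @: Sym)%VS.
  apply/span_subvP => y /mapP[s _ ->]; rewrite -Sig_pair.
  exact/memv_img/pair_Sym.
set W := (<<[seq ddv s | s <- enum S]>> + <[ev (cell r)]>)%VS.
have Wd : forall s, ddv s \in W.
  move=> s; rewrite -[ddv s]addr0; apply: memv_add; last exact: mem0v.
  by apply/memv_span/map_f; rewrite mem_enum.
have sub2 : (fullv <= W)%VS.
  apply/subvP => y _; rewrite (@vec_decomp _ predT y) //.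
  apply: memv_suml => c _; apply: memvZ.
  have [u <-] := cell_side c; move: u; apply: path_prop.
    move=> a b; case/or3P => [/eqP <-|/eqP <-|/eqP ->] //; last by rewrite cell_next.
    move=> Wa; have -> : ev (cell (alpha a)) = ev (cell a) + ddv a.
      by rewrite /ddv addrA ffadd add0r.
    exact: memvD.
  rewrite -[ev _]add0r; apply: memv_add; first exact: mem0v.
  exact: memv_line.
have := dimvS sub2; rewrite dimfull => h1.
apply: (leq_trans h1); apply: (leq_trans (dim_add_le _ _)).
apply: leq_add; first exact: (leq_trans (dimvS sub1)).
by rewrite dim_vline leq_b1.
Qed.


Lemma P_memP (x : VS) : x \in P -> forall s, x s = x (next (alpha s)).
Proof. by rewrite P_mem => /forallP xS s; apply/eqP. Qed.

Lemma sum_next (x : VS) c :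
  \sum_(s | cell s == c) x (next s) = \sum_(s | cell s == c) x s.
Proof.
rewrite [RHS](reindex_inj inj_next) /=.
by apply: eq_bigl => s; rewrite cell_next.
Qed.

Lemma AP_sub_Z : (AP <= Z)%VS.
Proof.
apply/subvP => y /memv_imgP[x /memv_capP[xP _] ->].
have hP := P_memP xP.
apply/memv_capP; split.
  rewrite Sym_mem; apply/forallP => s; rewrite mklinE !ffunE.
  rewrite [x (alpha s)]hP alphaK -hP.
  by rewrite [X in X == _]addrC eqxx.
rewrite memv_ker !mklinE; apply/eqP/ffunP => c; rewrite !ffunE.
under eq_bigr do rewrite ffunE.
by rewrite big_split /= sum_next f2add.
Qed.

Definition colv : VS := [ffun s => bit (col s)].

Lemma dimZ_AP : (\dim Z <= \dim AP)%N.
Proof.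
have e1 := limg_ker_dim Sigm Sym.
have e2 := limg_ker_dim Am P'.
have d1 := dimP. have d2 := dimKer. have d3 := dimP'. have d4 := dimker1.
have d5 := dimSym. have d6 := dimSig. have d7 := cardH.
have d8 : (#|ND| + num_discs next cell = #|C|)%N.
  rewrite /num_discs -(cardC ND); congr (_ + _).
  by apply: eq_card => c; rewrite !inE negbK.
have e := euler.
rewrite /Z /AP; lia.
Qed.


Lemma Z_sub_AP : (Z <= AP)%VS.
Proof.
case: (dimv_leqif_sup AP_sub_Z) => _ <-.
by rewrite eqn_leq (dimvS AP_sub_Z) dimZ_AP.
Qed.

Lemma sum_orbit (L : seq S) c (f : S -> F) :
  uniq L -> (forall t, (cell t == c) = (t \in L)) ->
  \sum_(t | cell t == c) f t = \sum_(t <- L) f t.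
Proof.
move=> uL HL; rewrite big_uniq //; apply: eq_bigl => t; exact: HL.
Qed.

Lemma sum_quad c s (f : S -> F) : quad_at next cell c s ->
  \sum_(t | cell t == c) f t =
  f s + f (next s) + f (next (next s)) + f (next (next (next s))).
Proof.
case=> cs [o4 H].
rewrite (@sum_orbit (orbit next s)); last 2 first.
- exact: orbit_uniq.
- move=> t; rewrite -fconnect_orbit; apply/eqP/idP => [/H //|st].
  by rewrite (cell_conn st).
by rewrite /orbit o4 /= !big_cons big_nil addr0 !addrA.
Qed.

Lemma sum_cyl c s t (f : S -> F) : cyl_at next cell c s t ->
  \sum_(u | cell u == c) f u = f s + f (next s) + (f t + f (next t)).
Proof.
case=> cs [ct [nst [o2 [o2' H]]]].
rewrite (@sum_orbit (orbit next s ++ orbit next t)); last 2 first.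
- rewrite cat_uniq !orbit_uniq andbT /=; apply/hasPn => u.
  rewrite -!fconnect_orbit => tu; apply/negP => su.
  by rewrite fsym in tu; rewrite (ftrans su tu) in nst.
- move=> u; rewrite mem_cat -!fconnect_orbit; apply/eqP/idP => [/H //|].
  by case/orP => hu; rewrite (cell_conn hu).
by rewrite big_cat /orbit o2 o2' /= !big_cons !big_nil !addr0 !addrA.
Qed.


Lemma quad_case (x : VS) c s
  (c0 c1 c2 c3 : bool) : quad_at next cell c s ->
  col s = c0 -> col (next s) = c1 -> col (next (next s)) = c2 ->
  col (next (next (next s))) = c3 ->
  \sum_(t | cell t == c) bit (col t) = bit c0 + bit c1 + bit c2 + bit c3 /\
  ((forall s, x (next s) = bit (col s) + x s) ->
  \sum_(t | cell t == c) bit (~~ col t) * x t =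
    bit (~~ c0) * x s + bit (~~ c1) * (bit c0 + x s) +
    bit (~~ c2) * (bit c1 + (bit c0 + x s)) +
    bit (~~ c3) * (bit c2 + (bit c1 + (bit c0 + x s)))).
Proof.
move=> Hq h0 h1 h2 h3; split; first by rewrite !(sum_quad _ Hq) h0 h1 h2 h3.
by move=> hA; rewrite !(sum_quad _ Hq) !hA h0 h1 h2 h3.
Qed.

Lemma cyl_case (x : VS) c s t
  (c0 c1 c2 c3 : bool) : cyl_at next cell c s t ->
  col s = c0 -> col (next s) = c1 -> col t = c2 -> col (next t) = c3 ->
  \sum_(u | cell u == c) bit (col u) = bit c0 + bit c1 + (bit c2 + bit c3) /\
  ((forall s, x (next s) = bit (col s) + x s) ->
  \sum_(u | cell u == c) bit (~~ col u) * x u =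
    bit (~~ c0) * x s + bit (~~ c1) * (bit c0 + x s) +
    (bit (~~ c2) * x t + bit (~~ c3) * (bit c2 + x t))).
Proof.
move=> Hc h0 h1 h2 h3; split; first by rewrite !(sum_cyl _ Hc) h0 h1 h2 h3.
by move=> hA; rewrite !(sum_cyl _ Hc) !hA h0 h1 h2 h3.
Qed.

Ltac fin1 E a := split; [by apply/eqP | move/E => ->;
  case: (f2cases a) => ->; apply/eqP; by []].
Ltac fin2 E a b := split; [by apply/eqP | move/E => ->;
  case: (f2cases a) => ->; case: (f2cases b) => ->; apply/eqP; by []].

Lemma cell_vals (x : VS) c :
  (c != cell r -> ~ chequered_quadrangle next col cell c /\
                  ~ opposite_colored_cylinder next col cell c) ->
  \sum_(t | cell t == c) bit (col t) = 0 /\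
  ((forall s, x (next s) = bit (col s) + x s) ->
  \sum_(t | cell t == c) bit (~~ col t) * x t = bit (c == cell r)).
Proof.
case: (eqVneq c (cell r)) => [->|hc] Hn.
  case: root_r => Hq [h0 h1 h2 h3].
  have [-> E] := (quad_case x Hq h0 (negbTE h1) h2 (negbTE h3)).
  by fin1 E (x r).
have [Hch Hop] := Hn isT.
have cq : forall s, cell s = c -> cell (next s) = c /\ cell (next (next s)) = c /\
    cell (next (next (next s))) = c.
  by move=> s cs; rewrite !cell_next.
case: (allowed hc) => [[s [Hq Hc]]|[[s [Hq Hc]]|[[s [Hq [h0 h1 h2 h3]]]|[Hch'|]]]].
- have [cs _] := Hq; have [c1 [c2 c3]] := cq s cs.
  have [-> E] := (quad_case x Hq (Hc _ cs) (Hc _ c1) (Hc _ c2) (Hc _ c3)).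
  by fin1 E (x s).
- have [cs _] := Hq; have [c1 [c2 c3]] := cq s cs.
  have [-> E] := (quad_case x Hq (negbTE (Hc _ cs)) (negbTE (Hc _ c1))
    (negbTE (Hc _ c2)) (negbTE (Hc _ c3))).
  by fin1 E (x s).
- have [-> E] := (quad_case x Hq h0 h1 (negbTE h2) (negbTE h3)).
  by fin1 E (x s).
- by case: (Hch Hch').
case=> [[s [t [Hy Hc]]]|[[s [t [Hy Hc]]]|Hop']]; last by case: (Hop Hop').
- have [cs [ct _]] := Hy.
  have cns : cell (next s) = c by rewrite cell_next.
  have cnt : cell (next t) = c by rewrite cell_next.
  have [-> E] := (cyl_case x Hy (Hc _ cs) (Hc _ cns) (Hc _ ct) (Hc _ cnt)).
  by fin2 E (x s) (x t).
- have [cs [ct _]] := Hy.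
  have cns : cell (next s) = c by rewrite cell_next.
  have cnt : cell (next t) = c by rewrite cell_next.
  have [-> E] := (cyl_case x Hy (negbTE (Hc _ cs)) (negbTE (Hc _ cns))
    (negbTE (Hc _ ct)) (negbTE (Hc _ cnt))).
  by fin2 E (x s) (x t).
Qed.


Lemma contra :
  (forall c, c != cell r -> ~ chequered_quadrangle next col cell c /\
                  ~ opposite_colored_cylinder next col cell c) -> False.
Proof.
move=> Hn.
have colZ : colv \in Z.
  apply/memv_capP; split.
    rewrite Sym_mem; apply/forallP => s; rewrite /colv !ffunE col_alpha.
    exact: eqxx.
  rewrite memv_ker mklinE; apply/eqP/ffunP => c; rewrite !ffunE.
  under eq_bigr do rewrite ffunE.
  exact: (cell_vals 0 (Hn c)).1.
have : colv \in AP by apply: (subvP Z_sub_AP).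
case/memv_imgP => x /memv_capP[xP _] Ex.
have hP := P_memP xP.
have hA : forall s, x (next s) = bit (col s) + x s.
  move=> s; have := congr1 (fun f : VS => f s) Ex.
  rewrite mklinE /colv !ffunE => ->.
  by rewrite -addrA f2add addr0.
pose g s := bit (~~ col s) * x s.
have t1 : \sum_s g s = 0.
  rewrite (bigID (fun s => s \in H)) /=.
  rewrite [X in _ + X](reindex_inj alpha_inj) /=.
  rewrite [X in _ + X](eq_bigl (fun s => s \in H)); last by move=> s; rewrite H_alpha negbK.
  rewrite -big_split /= big1 // => s _.
  rewrite /g (hP (alpha s)) alphaK hA col_alpha.
  by case: (col s) => /=; rewrite /bit /= ?mul0r ?addr0 // add0r f2add.
have t2 : \sum_s g s = 1.
  rewrite (partition_big cell xpredT) //=.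
  rewrite (eq_bigr (fun c => bit (c == cell r))); last first.
    move=> c _; exact: ((cell_vals x (Hn c)).2 hA).
  by rewrite (@sum_ind _ xpredT).
by move: f2one; rewrite -t2 t1 eqxx.
Qed.

End Main.

Theorem lemma1 (S C : finType) (next alpha : S -> S) (col : S -> bool)
    (cell : S -> C) (r : S) :
  UM0_ABAB next alpha col cell r ->
  exists c : C, c != cell r /\
    (chequered_quadrangle next col cell c \/
     opposite_colored_cylinder next col cell c).
Proof.
case=> [h1 [h2 [h3 [h4 [h5 [h6 [h7 [h8 h9]]]]]]]].
apply: Classical_Prop.NNPP => Hno.
apply: (contra h1 h2 h3 h4 h5 h6 h7 h8 h9) => c hc; split => Hc; apply: Hno;
  exists c; split => //; [left|right]; exact: Hc.
Qed.
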